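(* For every $k$-ring $R$, the category $R$-$\mathcal{U}Mod$ of left $R$-$k$-modules is complete and cocomplete.
   Context: $\mathcal{U}$ is the category of compactly generated weakly Hausdorff spaces (with products the $k$-ified products). A $k$-ring is a ring $R$ with a compactly generated weakly Hausdorff topology making $R$ an abelian group object in $\mathcal{U}$ and multiplication $R\times R\to R$ continuous. A left $R$-$k$-module is a left $R$-module with a compactly generated weakly Hausdorff topology making addition $A\times A\to A$ and the action $R\times A\to A$ continuous (products in $\mathcal{U}$); morphisms are continuous $R$-linear maps. *)

(* Defs.v *)
From Stdlib Require List.
From HB Require Import structures.
From mathcomp Require Import all_boot all_order all_algebra.
Set Implicit Arguments. Unset Strict Implicit. Unset Printing Implicit Defensive.
Import GRing.Theory.
Local Open Scope ring_scope.

Record topology (X : Type) := Topology {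
  open : (X -> Prop) -> Prop;
  open_full : open (fun _ => True);
  open_inter : forall U V, open U -> open V -> open (fun x => U x /\ V x);
  open_union : forall F : (X -> Prop) -> Prop,
      (forall U, F U -> open U) -> open (fun x => exists U, F U /\ U x)
}.

(* Many constructions below (products, k-ification) are naturally given as
   bare families of open sets; [opens X] is such a family. *)
Definition opens (X : Type) := (X -> Prop) -> Prop.

Definition closed (X : Type) (O : opens X) (A : X -> Prop) : Prop :=
  O (fun x => ~ A x).

Definition continuous (X Y : Type) (OX : opens X) (OY : opens Y)
  (f : X -> Y) : Prop :=
  forall V, OY V -> OX (fun x => V (f x)).

Definition compact_space (X : Type) (O : opens X) : Prop :=
  forall (J : Type) (U : J -> X -> Prop),
    (forall j, O (U j)) -> (forall x, exists j, U j x) ->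
    exists l : seq J, forall x, exists2 j, List.In j l & U j x.

Definition hausdorff_space (X : Type) (O : opens X) : Prop :=
  forall x y : X, x <> y -> exists U V, O U /\ O V /\ U x /\ V y /\
    (forall z, U z -> V z -> False).

Definition k_closed (X : Type) (O : opens X) (A : X -> Prop) : Prop :=
  forall (K : Type) (OK : topology K),
    compact_space (open OK) -> hausdorff_space (open OK) ->
    forall u : K -> X, continuous (open OK) O u -> closed (open OK) (fun k => A (u k)).

Definition compactly_generated (X : Type) (O : opens X) : Prop :=
  forall A, k_closed O A -> closed O A.

Definition weakly_hausdorff (X : Type) (O : opens X) : Prop :=
  forall (K : Type) (OK : topology K),
    compact_space (open OK) -> hausdorff_space (open OK) ->
    forall u : K -> X, continuous (open OK) O u -> closed O (fun x => exists k, u k = x).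

Definition cgwh (X : Type) (O : topology X) : Prop :=
  compactly_generated (open O) /\ weakly_hausdorff (open O).

Definition kify (X : Type) (O : opens X) : opens X :=
  fun W => k_closed O (fun x => ~ W x).

Definition prod_opens (X Y : Type) (OX : opens X) (OY : opens Y) : opens (X * Y) :=
  fun W => forall p, W p -> exists U V, OX U /\ OY V /\ U p.1 /\ V p.2 /\
     (forall x y, U x -> V y -> W (x, y)).

(* The product in U: k-ification of the product topology. *)
Definition kprod (X Y : Type) (OX : opens X) (OY : opens Y) : opens (X * Y) :=
  kify (prod_opens OX OY).

Record kring := KRing {
  kr :> pzRingType;
  krtop : topology kr;
  kr_cgwh : cgwh krtop;
  kr_add : continuous (kprod (open krtop) (open krtop)) (open krtop)
             (fun p : kr * kr => p.1 + p.2);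
  kr_opp : continuous (open krtop) (open krtop) (fun x : kr => - x);
  kr_mul : continuous (kprod (open krtop) (open krtop)) (open krtop)
             (fun p : kr * kr => p.1 * p.2)
}.
(* (continuity of the unit map 0 : * -> R is automatic) *)

Record kmod (R : kring) := KMod {
  kcar :> lmodType (kr R);
  kmtop : topology kcar;
  km_cgwh : cgwh kmtop;
  km_add : continuous (kprod (open kmtop) (open kmtop)) (open kmtop)
             (fun p : kcar * kcar => p.1 + p.2);
  km_act : continuous (kprod (open (krtop R)) (open kmtop)) (open kmtop)
             (fun p : kr R * kcar => p.1 *: p.2)
}.

Record kmod_hom (R : kring) (A B : kmod R) := KModHom {
  hfun :> A -> B;
  hfun_linear : forall (a : kr R) (x y : A), hfun (a *: x + y) = a *: hfun x + hfun y;
  hfun_cont : continuous (open (kmtop A)) (open (kmtop B)) hfun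
}.

Record small_cat := SmallCat {
  cobj :> Type;
  chom : cobj -> cobj -> Type;
  cid : forall i, chom i i;
  ccomp : forall i j k, chom j k -> chom i j -> chom i k;
  ccomp_id_l : forall i j (f : chom i j), ccomp (cid j) f = f;
  ccomp_id_r : forall i j (f : chom i j), ccomp f (cid i) = f;
  ccomp_assoc : forall i j k l (h : chom k l) (g : chom j k) (f : chom i j),
      ccomp h (ccomp g f) = ccomp (ccomp h g) f
}.

Record diagram (C : small_cat) (R : kring) := Diagram {
  dobj :> C -> kmod R;
  dmap : forall i j, chom i j -> kmod_hom (dobj i) (dobj j);
  dmap_id : forall i (x : dobj i), dmap (cid i) x = x;
  dmap_comp : forall i j k (g : chom j k) (f : chom i j) (x : dobj i),
      dmap (ccomp g f) x = dmap g (dmap f x)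
}.

Definition is_limit (C : small_cat) (R : kring) (D : diagram C R)
  (L : kmod R) (pi : forall i, kmod_hom L (D i)) : Prop :=
  (forall i j (f : chom i j) (x : L), dmap D f (pi i x) = pi j x) /\
  forall (M : kmod R) (tau : forall i, kmod_hom M (D i)),
    (forall i j (f : chom i j) (x : M), dmap D f (tau i x) = tau j x) ->
    exists u : kmod_hom M L,
      (forall i (x : M), pi i (u x) = tau i x) /\
      forall v : kmod_hom M L, (forall i (x : M), pi i (v x) = tau i x) ->
        forall x, v x = u x.

Definition is_colimit (C : small_cat) (R : kring) (D : diagram C R)
  (L : kmod R) (iota : forall i, kmod_hom (D i) L) : Prop :=
  (forall i j (f : chom i j) (x : D i), iota j (dmap D f x) = iota i x) /\
  forall (M : kmod R) (tau : forall i, kmod_hom (D i) M),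
    (forall i j (f : chom i j) (x : D i), tau j (dmap D f x) = tau i x) ->
    exists u : kmod_hom L M,
      (forall i (x : D i), u (iota i x) = tau i x) /\
      forall v : kmod_hom L M, (forall i (x : D i), v (iota i x) = tau i x) ->
        forall y, v y = u y.

Arguments is_limit {C R} D L pi.
Arguments is_colimit {C R} D L iota.

Definition kmod_complete (R : kring) : Prop :=
  forall (C : small_cat) (D : diagram C R),
    exists (L : kmod R) (pi : forall i, kmod_hom L (D i)), is_limit D L pi.

Definition kmod_cocomplete (R : kring) : Prop :=
  forall (C : small_cat) (D : diagram C R),
    exists (L : kmod R) (iota : forall i, kmod_hom (D i) L), is_colimit D L iota.

(* Main.v *)
From HB Require Import structures.
From mathcomp Require Import all_boot all_order all_algebra.
From mathcomp Require Import boolp.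
From Stdlib Require Import Classical FunctionalExtensionality PropExtensionality ClassicalEpsilon ProofIrrelevance.
Require Import Defs.
Set Implicit Arguments. Unset Strict Implicit. Unset Printing Implicit Defensive.
Import GRing.Theory.

Ltac splits := repeat match goal with |- _ /\ _ => split end.

Section Topo.
Variables (X : Type) (O : topology X).

Lemma open_ext (U V : X -> Prop) : open O U -> (forall x, U x <-> V x) -> open O V.
Proof.
move=> HU HUV; have -> : V = U; last exact: HU.
by apply: functional_extensionality => x; apply: propositional_extensionality; apply: iff_sym.
Qed.

Lemma open_unionP (F : (X -> Prop) -> Prop) (W : X -> Prop) :
  (forall U, F U -> open O U) -> (forall x, W x <-> exists U, F U /\ U x) -> open O W.
Proof.
move=> HF HW; apply: (open_ext (@open_union _ O F HF)) => x; exact: iff_sym.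
Qed.

Lemma open_local (W : X -> Prop) :
  (forall x, W x -> exists U, open O U /\ U x /\ forall z, U z -> W z) -> open O W.
Proof.
move=> H; apply: (@open_unionP (fun U => open O U /\ forall z, U z -> W z)).
- by move=> U [].
- move=> x; split.
  + move=> Wx; case: (H x Wx) => U [oU [Ux HU]]; exists U; by split.
  + by case=> U [[_ HU] Ux]; apply: HU.
Qed.

Lemma open_empty : open O (fun _ => False).
Proof. by apply: (@open_unionP (fun _ => False)) => // x; split => // [[U [[]]]]. Qed.

Lemma open_finter (J : Type) (W : J -> X -> Prop) (l : seq J) :
  (forall j, List.In j l -> open O (W j)) -> open O (fun z => forall j, List.In j l -> W j z).
Proof.
elim: l => [|j l IH] H.
- by apply: (open_ext (open_full O)) => x; split => // _ j [].
- apply: (open_ext (open_inter (H j (or_introl erefl)) (IH (fun j' h => H j' (or_intror h))))) => x; split.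
  + by move=> [Hj Hl] j' [<-|h] //; apply: Hl.
  + by move=> Hx; split; [apply: Hx; left | move=> j' h; apply: Hx; right].
Qed.

Lemma compact_sep (F G : X -> Prop) : compact_space (open O) -> closed (open O) F ->
  (forall x, F x -> exists U V, open O U /\ open O V /\ U x /\ (forall z, G z -> V z)
      /\ (forall z, U z -> V z -> False)) ->
  exists U V, open O U /\ open O V /\ (forall z, F z -> U z) /\ (forall z, G z -> V z)
      /\ (forall z, U z -> V z -> False).
Proof.
move=> cpt cF H.
have H' : forall x : X, exists UV : (X -> Prop) * (X -> Prop),
  open O UV.1 /\ open O UV.2 /\ (forall z, G z -> UV.2 z) /\ (forall z, UV.1 z -> UV.2 z -> False)
  /\ (F x -> UV.1 x).
  move=> x; case: (classic (F x)) => Fx.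
  - case: (H x Fx) => U [V [oU [oV [Ux [GV d]]]]]; exists (U, V); by splits.
  - exists ((fun _ => False), (fun _ => True)); splits => //.
    + exact: open_empty.
    + exact: open_full.
have [c Hc] := choice _ H'.
pose Uc (j : option X) := match j with None => fun z => ~ F z | Some x => (c x).1 end.
have oU : forall j, open O (Uc j).
  by case=> [x|] //=; case: (Hc x).
have cov : forall x, exists j, Uc j x.
  move=> x; case: (classic (F x)) => Fx.
    + by exists (Some x) => /=; case: (Hc x) => _ [_ [_ [_ h]]]; apply: h.
    + by exists None.
have [l Hl] := cpt _ Uc oU cov.
exists (fun z => exists x, List.In (Some x) l /\ (c x).1 z).
exists (fun z => forall j, List.In j l -> match j with None => True | Some x => (c x).2 z end).
split; last split; last split; last split.
- apply: (@open_unionP (fun W => exists x, List.In (Some x) l /\ W = (c x).1)).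
  + by move=> U [x [_ ->]]; case: (Hc x).
  + move=> z; split.
    * by case=> x [Hx Hz]; exists (c x).1; split => //; exists x.
    * by case=> U [[x [Hx ->]] Hz]; exists x.
- apply: (@open_finter _ (fun j z => match j with None => True | Some x => (c x).2 z end)).
  case=> [x|] _ /=; [by case: (Hc x) => _ [] | exact: open_full].
- move=> z Fz; case: (Hl z) => [[x|] Hj Hz] /=; first by exists x.
  by [].
- move=> z Gz [x|] _ //; by case: (Hc x) => _ [_ [h _]]; apply: h.
- move=> z [x [Hx H1]] H2; have := H2 _ Hx => /= H3.
  by case: (Hc x) => _ [_ [_ [h _]]]; apply: (h z).
Qed.

Lemma point_sep (F : X -> Prop) (y : X) : compact_space (open O) -> hausdorff_space (open O) ->
  closed (open O) F -> ~ F y ->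
  exists U V, open O U /\ open O V /\ (forall z, F z -> U z) /\ V y
      /\ (forall z, U z -> V z -> False).
Proof.
move=> cpt hs cF Fy.
have [|U [V [oU [oV [FU [GV d]]]]]] := @compact_sep F (fun z => z = y) cpt cF.
  move=> x Fx; have xy : x <> y by move=> E; apply: Fy; rewrite -E.
  case: (hs x y xy) => U [V [oU [oV [Ux [Vy d]]]]].
  exists U, V; split; [done|split; [done|split; [done|split; [by move=> z ->|done]]]].
by exists U, V; splits => //; apply: GV.
Qed.

Lemma normal_sep (F G : X -> Prop) : compact_space (open O) -> hausdorff_space (open O) ->
  closed (open O) F -> closed (open O) G -> (forall z, F z -> G z -> False) ->
  exists U V, open O U /\ open O V /\ (forall z, F z -> U z) /\ (forall z, G z -> V z)
      /\ (forall z, U z -> V z -> False).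
Proof.
move=> cpt hs cF cG d.
apply: compact_sep => // x Fx.
have [U [V [oU [oV [GU [Vx d']]]]]] := @point_sep G x cpt hs cG (d x Fx).
exists V, U; splits => // z h1 h2; exact: d' h2 h1.
Qed.

Definition sub_opens (P : X -> Prop) : opens {x | P x} :=
  fun W => exists U, open O U /\ forall s, W s <-> U (proj1_sig s).

Lemma sub_full P : sub_opens (P := P) (fun _ => True).
Proof. by exists (fun _ => True); split => //; exact: open_full. Qed.

Lemma sub_inter P (U V : {x | P x} -> Prop) : sub_opens U -> sub_opens V ->
  sub_opens (fun x => U x /\ V x).
Proof.
case=> U' [oU hU] [V' [oV hV]]; exists (fun x => U' x /\ V' x); split.
  exact: open_inter.
by move=> s; rewrite hU hV.
Qed.

Lemma sub_union P (F : ({x | P x} -> Prop) -> Prop) :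
  (forall U, F U -> sub_opens U) -> sub_opens (fun x => exists U, F U /\ U x).
Proof.
move=> HF.
pose G := fun U => open O U /\ exists W, F W /\ forall s, W s <-> U (proj1_sig s).
exists (fun x => exists U, G U /\ U x); split.
  by apply: (@open_union _ O G) => U [].
move=> s; split.
- case=> W [FW Ws]; case: (HF W FW) => U [oU hU].
  by exists U; split; [split => //; exists W | rewrite -hU].
- by case=> U [[oU [W [FW hW]]] Us]; exists W; split => //; rewrite hW.
Qed.

Definition sub_top P : topology {x | P x} :=
  @Topology _ (@sub_opens P) (@sub_full P) (@sub_inter P) (@sub_union P).

Lemma in_somes (J : Type) (j : J) (l : seq (option J)) :
  List.In (Some j) l -> List.In j (pmap id l).
Proof.
elim: l => [|[a|] l IH] //= [E|h].
- by case: E => ->; left.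
- by right; apply: IH.
- by [].
- by apply: IH.
Qed.

Lemma sub_compact P : compact_space (open O) -> closed (open O) P ->
  compact_space (open (sub_top P)).
Proof.
move=> cpt cP J Us oUs cov.
have [c Hc] := choice _ oUs.
pose W (j : option J) := match j with None => fun x => ~ P x | Some j => c j end.
have oW : forall j, open O (W j).
  by case=> [j|] //=; case: (Hc j).
have covW : forall x, exists j, W j x.
  move=> x; case: (classic (P x)) => Px.
    + case: (cov (exist _ x Px)) => j hj; exists (Some j) => /=.
      by case: (Hc j) => _ h; rewrite -(h (exist _ x Px)).
    + by exists None.
have [l Hl] := cpt _ W oW covW.
exists (pmap id l) => s; case: (Hl (proj1_sig s)) => [[j|] Hj Hs].
- exists j; first exact: in_somes.
  by case: (Hc j) => _ h; rewrite h.
- by case: Hs; exact: (proj2_sig s).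
Qed.

Lemma sub_hausdorff P : hausdorff_space (open O) -> hausdorff_space (open (sub_top P)).
Proof.
move=> hs s t st.
have st' : proj1_sig s <> proj1_sig t.
  move=> E; apply: st; move: E; case: s => [x px]; case: t => [y py] /= E; subst.
  by rewrite (proof_irrelevance _ px py).
case: (hs _ _ st') => U [V [oU [oV [Us [Vt d]]]]].
exists (fun s => U (proj1_sig s)), (fun s => V (proj1_sig s)); splits => //.
- by exists U.
- by exists V.
- by move=> z; apply: d.
Qed.

End Topo.

Definition unit_top : topology unit :=
  @Topology unit (fun _ => True) I (fun _ _ _ _ => I) (fun _ _ => I).

Lemma unit_compact : compact_space (open unit_top).
Proof.
move=> J U _ cov; case: (cov tt) => j hj; exists [:: j] => [[]].
by exists j; [left|].
Qed.

Lemma unit_hausdorff : hausdorff_space (open unit_top).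
Proof. by case=> [[]] []. Qed.

Lemma cont_comp (X Y Z : Type) (OX : opens X) (OY : opens Y) (OZ : opens Z) f g :
  continuous OX OY f -> continuous OY OZ g -> continuous OX OZ (fun x => g (f x)).
Proof. by move=> hf hg V hV; exact: (hf _ (hg _ hV)). Qed.

Lemma wh_point (X : Type) (O : topology X) : weakly_hausdorff (open O) ->
  forall x, open O (fun z => z <> x).
Proof.
move=> wh x.
have := wh _ unit_top unit_compact unit_hausdorff (fun _ => x) (fun V _ => I).
move=> h; apply: (open_ext h) => z; split.
- by move=> nz E; apply: nz; exists tt.
- by move=> nz [_ E]; apply: nz.
Qed.

Lemma wh_sep (X : Type) (OX : topology X) (K : Type) (OK : topology K)
  (p : K -> X) (x y : X) :
  weakly_hausdorff (open OX) -> compact_space (open OK) -> hausdorff_space (open OK) ->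
  continuous (open OK) (open OX) p -> x <> y ->
  exists A B, open OX A /\ open OX B /\ A x /\ B y /\ forall k, A (p k) -> B (p k) -> False.
Proof.
move=> wh cpt hs cp xy.
have cl : forall z, closed (open OK) (fun k => p k = z).
  move=> z; apply: (open_ext (cp _ (wh_point wh z))) => k; tauto.
have [U0 [V0 [oU [oV [FU [GV d]]]]]] :=
  @normal_sep _ OK (fun k => p k = x) (fun k => p k = y) cpt hs (cl x) (cl y)
     (fun z h1 h2 => xy (etrans (esym h1) h2)).
have img : forall U0 : K -> Prop, open OK U0 ->
   open OX (fun z => ~ exists s : {k | ~ U0 k}, p (proj1_sig s) = z).
  move=> U oU0.
  have cS : closed (open OK) (fun k => ~ U k).
    by apply: (open_ext oU0) => k; split => [h|/NNPP //]; apply.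
  apply: (wh _ (sub_top OK (fun k => ~ U k)) (sub_compact cpt cS) (@sub_hausdorff _ OK _ hs) (fun s => p (proj1_sig s))).
  by move=> V hV; exists (fun k => V (p k)); split => //; exact: cp.
exists (fun z => ~ exists s : {k | ~ U0 k}, p (proj1_sig s) = z).
exists (fun z => ~ exists s : {k | ~ V0 k}, p (proj1_sig s) = z).
splits; try exact: img.
- by case=> [[k nk] /= E]; apply: nk; apply: FU.
- by case=> [[k nk] /= E]; apply: nk; apply: GV.
- move=> k hA hB; apply: (d k).
  + by apply: NNPP => nk; apply: hA; exists (exist _ k nk).
  + by apply: NNPP => nk; apply: hB; exists (exist _ k nk).
Qed.

Local Open Scope ring_scope.


Lemma prod_fst (A B K : Type) (OA : topology A) (OB : topology B) (OK : opens K) (h : K -> A * B) :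
  continuous OK (prod_opens (open OA) (open OB)) h -> continuous OK (open OA) (fun k => (h k).1).
Proof.
move=> hc V oV; apply: (hc (fun p => V p.1)) => p Vp.
exists V, (fun _ => True); splits => //; exact: open_full.
Qed.

Lemma prod_snd (A B K : Type) (OA : topology A) (OB : topology B) (OK : opens K) (h : K -> A * B) :
  continuous OK (prod_opens (open OA) (open OB)) h -> continuous OK (open OB) (fun k => (h k).2).
Proof.
move=> hc V oV; apply: (hc (fun p => V p.2)) => p Vp.
exists (fun _ => True), V; splits => //; exact: open_full.
Qed.

Lemma pair_cont (A B K : Type) (OA OB : opens _) (OK : topology K) (h1 : K -> A) (h2 : K -> B) :
  continuous (open OK) OA h1 -> continuous (open OK) OB h2 ->
  continuous (open OK) (prod_opens OA OB) (fun k => (h1 k, h2 k)).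
Proof.
move=> c1 c2 W oW; apply: open_local => k Wk.
case: (oW _ Wk) => U [V [oU [oV [Uk [Vk HW]]]]].
exists (fun k => U (h1 k) /\ V (h2 k)); splits => //.
- exact: open_inter (c1 _ oU) (c2 _ oV).
- by move=> z [h h']; apply: HW.
Qed.

Lemma cpt_kprod (A B K : Type) (OA OB : opens _) (OK : topology K) (h : K -> A * B) :
  compact_space (open OK) -> hausdorff_space (open OK) ->
  continuous (open OK) (prod_opens OA OB) h -> continuous (open OK) (kprod OA OB) h.
Proof.
move=> cpt hs hc W oW; have := oW K OK cpt hs h hc.
by move=> H; apply: (open_ext H) => k; split => [/NNPP|] //; tauto.
Qed.

Section KInit.
Variables (R : kring) (L : lmodType (kr R)) (I : Type) (M : I -> kmod R) (f : forall i, L -> M i).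
Hypothesis f_lin : forall i a x y, f i (a *: x + y) = a *: f i x + f i y.
Hypothesis f_inj : forall x y, (forall i, f i x = f i y) -> x = y.

Definition ktest (K : Type) (OK : topology K) (g : K -> L) :=
  forall i, continuous (open OK) (open (kmtop (M i))) (fun k => f i (g k)).

Definition kopen (W : L -> Prop) : Prop :=
  forall (K : Type) (OK : topology K), compact_space (open OK) -> hausdorff_space (open OK) ->
  forall g : K -> L, ktest OK g -> open OK (fun k => W (g k)).

Lemma kopen_full : kopen (fun _ => True).
Proof. by move=> K OK _ _ g _; exact: open_full. Qed.

Lemma kopen_inter U V : kopen U -> kopen V -> kopen (fun x => U x /\ V x).
Proof. by move=> hU hV K OK c h g t; exact: open_inter (hU K OK c h g t) (hV K OK c h g t). Qed.

Lemma kopen_union (F : (L -> Prop) -> Prop) : (forall U, F U -> kopen U) ->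
  kopen (fun x => exists U, F U /\ U x).
Proof.
move=> HF K OK c h g t.
apply: (@open_unionP _ OK (fun V => exists U, F U /\ V = (fun k => U (g k)))).
- by move=> V [U [FU ->]]; exact: HF.
- move=> k; split.
  + by case=> U [FU Uk]; exists (fun k => U (g k)); split => //; exists U.
  + by case=> V [[U [FU ->]] Uk]; exists U.
Qed.

Definition ktop : topology L := @Topology L kopen kopen_full kopen_inter kopen_union.

Lemma f_cont i : continuous kopen (open (kmtop (M i))) (f i).
Proof. by move=> V oV K OK c h g t; exact: t. Qed.

Lemma ktest_cont (K : Type) (OK : topology K) g : compact_space (open OK) -> hausdorff_space (open OK) ->
  ktest OK g -> continuous (open OK) kopen g.
Proof. by move=> c h t W oW; exact: oW. Qed.

Lemma into_cont (N : Type) (ON : topology N) (u : N -> L) : compactly_generated (open ON) ->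
  (forall i, continuous (open ON) (open (kmtop (M i))) (fun x => f i (u x))) ->
  continuous (open ON) kopen u.
Proof.
move=> cg hu W oW.
have := cg (fun m => ~ W (u m)) => H.
apply: (open_ext (H _)) => [|m]; last by split => [/NNPP|] //; tauto.
move=> K OK c hs h ch.
apply: (open_ext (oW K OK c hs (fun k => u (h k)) _)) => [i|k]; last tauto.
exact: (cont_comp ch (hu i)).
Qed.

Lemma kcg : compactly_generated kopen.
Proof.
move=> A kA K OK c hs g t.
exact: (kA K OK c hs g (ktest_cont c hs t)).
Qed.

Lemma kwh : weakly_hausdorff kopen.
Proof.
move=> K OK cpt hs u cu K' OK' cpt' hs' g tg.
apply: open_local => k' Hk'.
have H1 : forall k, exists UV : (K -> Prop) * (K' -> Prop),
    open OK UV.1 /\ open OK' UV.2 /\ UV.1 k /\ UV.2 k' /\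
    forall a b, UV.1 a -> UV.2 b -> u a = g b -> False.
  move=> k.
  have [i ni] : exists i, f i (u k) <> f i (g k').
    apply: NNPP => nx; apply: Hk'; exists k; apply: f_inj => i.
    by apply: NNPP => ne; apply: nx; exists i.
  have cp : continuous (open OK) (open (kmtop (M i))) (fun k => f i (u k)).
    exact: cont_comp cu (@f_cont i).
  have [A [B [oA [oB [Ax [By d]]]]]] :=
    wh_sep (proj2 (km_cgwh (M i))) cpt hs cp ni.
  exists ((fun a => A (f i (u a))), (fun b => B (f i (g b)))); splits => /=.
  - exact: cp.
  - exact: tg.
  - exact: Ax.
  - exact: By.
  - by move=> a b ha hb E; apply: (d a) => //; rewrite E.
have [c Hc] := choice _ H1.
have oc : forall j, open OK (c j).1 by move=> j; case: (Hc j).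
have cov : forall k, exists j, (c j).1 k by move=> k; exists k; case: (Hc k) => _ [_ []].
have [l Hl] := cpt _ _ oc cov.
exists (fun b => forall j, List.In j l -> (c j).2 b); splits.
- by apply: (@open_finter _ OK' _ (fun j => (c j).2)) => j _; case: (Hc j) => _ [].
- by move=> j _; case: (Hc j) => _ [_ [_ []]].
- move=> b Hb [a E]; case: (Hl a) => j Hj ha.
  by case: (Hc j) => _ [_ [_ [_ d]]]; apply: (d a b ha (Hb j Hj)).
Qed.

Lemma kcgwh : cgwh ktop.
Proof. by split; [exact: kcg | exact: kwh]. Qed.

Lemma kprod_into (Y Z : Type) (OY : opens Y) (OZ : opens Z) (op : Y * Z -> L) :
  (forall (K : Type) (OK : topology K), compact_space (open OK) -> hausdorff_space (open OK) ->
     forall h : K -> Y * Z, continuous (open OK) (prod_opens OY OZ) h -> ktest OK (fun k => op (h k))) ->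
  continuous (kprod OY OZ) kopen op.
Proof.
move=> H W oW K OK c hs h ch.
apply: (open_ext (oW K OK c hs _ (H K OK c hs h ch))) => k; tauto.
Qed.

Lemma f0 i : f i 0 = 0.
Proof.
have := f_lin i 1 0 0; rewrite !scale1r addr0 => h.
by apply: (@addrI _ (f i 0)); rewrite addr0 -h.
Qed.

Lemma fD i x y : f i (x + y) = f i x + f i y.
Proof. by have := f_lin i 1 x y; rewrite !scale1r. Qed.

Lemma fZ i a x : f i (a *: x) = a *: f i x.
Proof. by rewrite -[a *: x]addr0 f_lin f0 addr0. Qed.

Lemma kadd_cont : continuous (kprod kopen kopen) kopen (fun p : L * L => p.1 + p.2).
Proof.
apply: kprod_into => K OK c hs h ch i.
have -> : (fun k => f i ((h k).1 + (h k).2)) =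
   (fun k => (fun p : M i * M i => p.1 + p.2) ((fun k => (f i (h k).1, f i (h k).2)) k)).
  by apply: functional_extensionality => k; rewrite fD.
have hp : continuous (open OK) (kprod (open (kmtop (M i))) (open (kmtop (M i)))) (fun k => (f i (h k).1, f i (h k).2)).
  apply: cpt_kprod => //; apply: pair_cont.
  - exact: cont_comp (prod_fst (OA := ktop) (OB := ktop) ch) (@f_cont i).
  - exact: cont_comp (prod_snd (OA := ktop) (OB := ktop) ch) (@f_cont i).
exact: (cont_comp hp (@km_add _ (M i))).
Qed.

Lemma kact_cont : continuous (kprod (open (krtop R)) kopen) kopen (fun p : kr R * L => p.1 *: p.2).
Proof.
apply: kprod_into => K OK c hs h ch i.
have -> : (fun k => f i ((h k).1 *: (h k).2)) =
   (fun k => (fun p : kr R * M i => p.1 *: p.2) ((fun k => ((h k).1, f i (h k).2)) k)).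
  by apply: functional_extensionality => k; rewrite fZ.
have hp : continuous (open OK) (kprod (open (krtop R)) (open (kmtop (M i)))) (fun k => ((h k).1, f i (h k).2)).
  apply: cpt_kprod => //; apply: pair_cont.
  - exact: (prod_fst (OA := krtop R) (OB := ktop) ch).
  - exact: cont_comp (prod_snd (OA := krtop R) (OB := ktop) ch) (@f_cont i).
exact: (cont_comp hp (@km_act _ (M i))).
Qed.

Definition kmodL : kmod R := @KMod R L ktop kcgwh kadd_cont kact_cont.

End KInit.

Section HomLemmas.
Variables (R : kring) (A B : kmod R) (h : kmod_hom A B).
Lemma hom0 : h 0 = 0.
Proof.
have := hfun_linear h 1 0 0; rewrite !scale1r addr0 => e.
by apply: (@addrI _ (h 0)); rewrite addr0 -e.
Qed.
Lemma homD x y : h (x + y) = h x + h y.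
Proof. by have := hfun_linear h 1 x y; rewrite !scale1r. Qed.
Lemma homZ a x : h (a *: x) = a *: h x.
Proof. by rewrite -[a *: x]addr0 hfun_linear hom0 addr0. Qed.
Lemma homN x : h (- x) = - h x.
Proof. by apply: (@addrI _ (h x)); rewrite -homD !subrr hom0. Qed.
End HomLemmas.

Section Lim.
Variables (R : kring) (C : small_cat) (D : diagram C R).

Definition limP (x : forall i : C, D i) := forall i j (g : chom i j), dmap D g (x i) = x j.
Definition limT := {x : forall i : C, D i | limP x}.

HB.instance Definition _ := gen_eqMixin limT.
HB.instance Definition _ := gen_choiceMixin limT.

Lemma limT_eq (x y : limT) : (forall i, proj1_sig x i = proj1_sig y i) -> x = y.
Proof.
case: x y => [x hx] [y hy] /= H.
have E : x = y := functional_extensionality_dep _ _ H.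
subst; f_equal; exact: proof_irrelevance.
Qed.

Definition lim0 : limT := @exist _ limP (fun i => 0) (fun i j g => hom0 (dmap D g)).
Definition limN (x : limT) : limT := @exist _ limP (fun i => - proj1_sig x i)
  (fun i j g => etrans (homN (dmap D g) _) (f_equal _ (proj2_sig x i j g))).
Definition limD (x y : limT) : limT := @exist _ limP (fun i => proj1_sig x i + proj1_sig y i)
  (fun i j g => etrans (homD (dmap D g) _ _) (f_equal2 _ (proj2_sig x i j g) (proj2_sig y i j g))).
Definition limZ (a : kr R) (x : limT) : limT := @exist _ limP (fun i => a *: proj1_sig x i)
  (fun i j g => etrans (homZ (dmap D g) _ _) (f_equal _ (proj2_sig x i j g))).

Lemma limDA : associative limD.
Proof. by move=> x y z; apply: limT_eq => i /=; rewrite addrA. Qed.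
Lemma limDC : commutative limD.
Proof. by move=> x y; apply: limT_eq => i /=; rewrite addrC. Qed.
Lemma lim0D : left_id lim0 limD.
Proof. by move=> x; apply: limT_eq => i /=; rewrite add0r. Qed.
Lemma limND : left_inverse lim0 limN limD.
Proof. by move=> x; apply: limT_eq => i /=; rewrite addNr. Qed.

HB.instance Definition _ := GRing.isZmodule.Build limT limDA limDC lim0D limND.

Lemma limZA a b (v : limT) : limZ a (limZ b v) = limZ (a * b) v.
Proof. by apply: limT_eq => i /=; rewrite scalerA. Qed.
Lemma limZ1 : left_id 1 limZ.
Proof. by move=> x; apply: limT_eq => i /=; rewrite scale1r. Qed.
Lemma limZDr : right_distributive limZ +%R.
Proof. by move=> a x y; apply: limT_eq => i /=; rewrite scalerDr. Qed.
Lemma limZDl v : {morph limZ^~ v: a b / a + b}.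
Proof. by move=> a b; apply: limT_eq => i /=; rewrite scalerDl. Qed.

HB.instance Definition _ := GRing.Zmodule_isLmodule.Build (kr R) limT limZA limZ1 limZDr limZDl.

Definition limf (i : C) (x : limT) : D i := proj1_sig x i.

Lemma limf_lin i a x y : limf i (a *: x + y) = a *: limf i x + limf i y.
Proof. by []. Qed.

Lemma limf_inj x y : (forall i, limf i x = limf i y) -> x = y.
Proof. exact: limT_eq. Qed.

Definition limK : kmod R := @kmodL R limT C D limf limf_lin limf_inj.

Definition limpi (i : C) : kmod_hom limK (D i) :=
  @KModHom R limK (D i) (limf i) (@limf_lin i) (@f_cont R limT C D limf i).

Lemma lim_is_limit : is_limit D limK limpi.
Proof.
split.
  by move=> i j g x; exact: (proj2_sig x i j g).
move=> N tau htau.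
pose u (n : N) : limK := @exist _ limP (fun i => tau i n) (fun i j g => htau i j g n).
have ulin : forall a x y, u (a *: x + y) = a *: u x + u y.
  by move=> a x y; apply: limT_eq => i /=; rewrite hfun_linear.
have ucont : continuous (open (kmtop N)) (open (kmtop limK)) u.
  apply: (@into_cont R limT C D limf N (kmtop N) u (proj1 (km_cgwh N))).
  by move=> i; exact: hfun_cont.
exists (@KModHom R N limK u ulin ucont); split => //.
by move=> v hv x; apply: limT_eq => i /=; exact: hv.
Qed.

End Lim.

Section Colim.
Variables (R : kring) (C : small_cat) (D : diagram C R).

Definition XT := {i : C & D i}.

Definition cocone (N : kmod R) (tau : forall i, kmod_hom (D i) N) :=
  forall i j (g : chom i j) (x : D i), tau j (dmap D g x) = tau i x.

Definition sumv (N : kmod R) (tau : forall i, kmod_hom (D i) N) (s : seq XT) : N :=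
  \sum_(p <- s) tau (projT1 p) (projT2 p).

Definition crel (s t : seq XT) : Prop :=
  forall (N : kmod R) (tau : forall i, kmod_hom (D i) N), cocone tau -> sumv tau s = sumv tau t.

Definition colP (P : seq XT -> Prop) := exists s, P = crel s.
Definition colT := {P : seq XT -> Prop | colP P}.

HB.instance Definition _ := gen_eqMixin colT.
HB.instance Definition _ := gen_choiceMixin colT.

Definition cls (s : seq XT) : colT := @exist _ colP (crel s) (ex_intro _ s erefl).
Definition rep (x : colT) : seq XT :=
  proj1_sig (constructive_indefinite_description _ (proj2_sig x)).
Lemma rep_spec x : proj1_sig x = crel (rep x).
Proof. rewrite /rep; case: (constructive_indefinite_description _ _) => s //. Qed.

Lemma cls_rep x : cls (rep x) = x.
Proof.
case: x => P hP; rewrite /cls.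
have E : crel (rep (exist _ P hP)) = P by rewrite -rep_spec.
move: (ex_intro _ _ _); rewrite E => h; f_equal; exact: proof_irrelevance.
Qed.

Lemma cls_eq s t : crel s t -> cls s = cls t.
Proof.
move=> st.
have E : crel s = crel t.
  apply: functional_extensionality => r; apply: propositional_extensionality.
  split => h N tau ht; [rewrite -(st N tau ht) | rewrite (st N tau ht)]; exact: h.
rewrite /cls; move: (ex_intro _ s _) (ex_intro _ t _); rewrite E => h1 h2.
f_equal; exact: proof_irrelevance.
Qed.

Lemma crel_rep_cls s : crel (rep (cls s)) s.
Proof.
have := rep_spec (cls s) => /= E.
have : crel s s by [].
by rewrite {1}E.
Qed.

Definition phi (N : kmod R) (tau : forall i, kmod_hom (D i) N) (x : colT) : N := sumv tau (rep x).

Lemma phi_cls N tau (ht : @cocone N tau) s : phi tau (cls s) = sumv tau s.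
Proof. exact: crel_rep_cls. Qed.

Lemma col_eq x y : (forall N tau, @cocone N tau -> phi tau x = phi tau y) -> x = y.
Proof. by move=> H; rewrite -(cls_rep x) -(cls_rep y); apply: cls_eq. Qed.

Definition negX (p : XT) : XT := existT _ (projT1 p) (- projT2 p).
Definition scX (a : kr R) (p : XT) : XT := existT _ (projT1 p) (a *: projT2 p).

Definition col0 : colT := cls [::].
Definition colN (x : colT) : colT := cls (map negX (rep x)).
Definition colD (x y : colT) : colT := cls (rep x ++ rep y).
Definition colZ (a : kr R) (x : colT) : colT := cls (map (scX a) (rep x)).

Section PhiLemmas.
Variables (N : kmod R) (tau : forall i, kmod_hom (D i) N) (ht : cocone tau).
Lemma phi0 : phi tau col0 = 0.
Proof. by rewrite /col0 (phi_cls ht) /sumv big_nil. Qed.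
Lemma phiD x y : phi tau (colD x y) = phi tau x + phi tau y.
Proof. by rewrite /colD (phi_cls ht) /sumv big_cat. Qed.
Lemma phiN x : phi tau (colN x) = - phi tau x.
Proof.
rewrite /colN (phi_cls ht) /sumv big_map /phi /sumv -sumrN.
by apply: eq_bigr => p _; rewrite /negX /= homN.
Qed.
Lemma phiZ a x : phi tau (colZ a x) = a *: phi tau x.
Proof.
rewrite /colZ (phi_cls ht) /sumv big_map /phi /sumv scaler_sumr.
by apply: eq_bigr => p _; rewrite /scX /= homZ.
Qed.
End PhiLemmas.

Lemma colDA : associative colD.
Proof. by move=> x y z; apply: col_eq => N tau ht; rewrite !(phiD ht) addrA. Qed.
Lemma colDC : commutative colD.
Proof. by move=> x y; apply: col_eq => N tau ht; rewrite !(phiD ht) addrC. Qed.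
Lemma col0D : left_id col0 colD.
Proof. by move=> x; apply: col_eq => N tau ht; rewrite !(phiD ht) (phi0 ht) add0r. Qed.
Lemma colND : left_inverse col0 colN colD.
Proof. by move=> x; apply: col_eq => N tau ht; rewrite !(phiD ht) (phi0 ht) (phiN ht) addNr. Qed.

HB.instance Definition _ := GRing.isZmodule.Build colT colDA colDC col0D colND.

Lemma colZA a b (v : colT) : colZ a (colZ b v) = colZ (a * b) v.
Proof. by apply: col_eq => N tau ht; rewrite !(phiZ ht) scalerA. Qed.
Lemma colZ1 : left_id 1 colZ.
Proof. by move=> x; apply: col_eq => N tau ht; rewrite !(phiZ ht) scale1r. Qed.
Lemma colZDr : right_distributive colZ +%R.
Proof. by move=> a x y; apply: col_eq => N tau ht; rewrite (phiZ ht) !(phiD ht) !(phiZ ht) scalerDr. Qed.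
Lemma colZDl v : {morph colZ^~ v: a b / a + b}.
Proof. by move=> a b; apply: col_eq => N tau ht; rewrite (phiZ ht) !(phiD ht) !(phiZ ht) scalerDl. Qed.

HB.instance Definition _ := GRing.Zmodule_isLmodule.Build (kr R) colT colZA colZ1 colZDr colZDl.

Definition PI := {N : kmod R & {tau : forall i, kmod_hom (D i) N | cocone tau}}.
Definition PM (p : PI) : kmod R := projT1 p.
Definition pf (p : PI) (x : colT) : PM p := phi (proj1_sig (projT2 p)) x.

Lemma pf_lin p a x y : pf p (a *: x + y) = a *: pf p x + pf p y.
Proof.
case: p => N [tau ht]; rewrite /pf /=.
by rewrite (phiD ht) (phiZ ht).
Qed.

Lemma pf_inj x y : (forall p, pf p x = pf p y) -> x = y.
Proof. by move=> H; apply: col_eq => N tau ht; exact: (H (existT _ N (exist _ tau ht))). Qed.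

Definition colK : kmod R := @kmodL R colT PI PM pf pf_lin pf_inj.

Definition iotaf (i : C) (x : D i) : colK := cls [:: existT _ i x].

Lemma phi_iota N tau (ht : @cocone N tau) i x : phi tau (iotaf x) = tau i x.
Proof. by rewrite /iotaf (phi_cls ht) /sumv big_seq1. Qed.

Lemma iota_lin i a (x y : D i) : iotaf (a *: x + y) = a *: iotaf x + iotaf y.
Proof.
apply: col_eq => N tau ht.
by rewrite (phiD ht) (phiZ ht) !(phi_iota ht) hfun_linear.
Qed.

Lemma iota_cont i : continuous (open (kmtop (D i))) (open (kmtop colK)) (@iotaf i).
Proof.
apply: (@into_cont R colT PI PM pf _ (kmtop (D i)) (@iotaf i) (proj1 (km_cgwh (D i)))).
move=> [N [tau ht]]; rewrite /pf /=.
have -> : (fun x => phi tau (iotaf x)) = tau i.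
  by apply: functional_extensionality => x; rewrite (phi_iota ht).
exact: hfun_cont.
Qed.

Definition colio (i : C) : kmod_hom (D i) colK := @KModHom R (D i) colK (@iotaf i) (@iota_lin i) (@iota_cont i).

Lemma cls_cons p s : cls (p :: s) = colio (projT1 p) (projT2 p) + cls s.
Proof.
apply: col_eq => N tau ht.
rewrite (phiD ht) (phi_cls ht) /= (phi_iota ht) (phi_cls ht) /sumv big_cons.
by [].
Qed.

Lemma col_is_colimit : is_colimit D colK colio.
Proof.
split.
  move=> i j g x; apply: col_eq => N tau ht.
  by rewrite /= !(phi_iota ht) ht.
move=> N tau htau.
pose u (x : colK) : N := phi tau x.
have ulin : forall a x y, u (a *: x + y) = a *: u x + u y.
  by move=> a x y; rewrite /u (phiD htau) (phiZ htau).
have ucont : continuous (open (kmtop colK)) (open (kmtop N)) u.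
  exact: (@f_cont R colT PI PM pf (existT _ N (exist _ tau htau))).
exists (@KModHom R colK N u ulin ucont); split.
  by move=> i x; rewrite /= /u (phi_iota htau).
move=> v hv y; rewrite -(cls_rep y) /=.
rewrite /u (phi_cls htau).
elim: (rep y) => [|p s IH].
  by rewrite /sumv big_nil; exact: (hom0 v).
by rewrite cls_cons (homD v) hv IH /sumv big_cons.
Qed.

End Colim.
Theorem lemma7p2 (R : kring) : kmod_complete R /\ kmod_cocomplete R.
Proof.
split=> C D.
- by exists (limK D), (limpi D); exact: lim_is_limit.
- by exists (colK D), (colio D); exact: col_is_colimit.
Qed.
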